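(* Let $\ell:\mathcal{H}\times\mathcal{Z}\times\mathcal{Z}\to[0,B]$ be a $B$-bounded pairwise loss with $\mathcal{R}_s(\ell\circ\mathcal{H})=C_d\cdot O(\sqrt{1/s})$, let $z_1,\dots,z_n$ be a stream, and suppose an online learning algorithm incurs buffer penalties based on a buffer of size $s$ updated with the RS-x algorithm (described below) and generates an ensemble $h_1,\dots,h_{n-1}$. Then with probability at least $1-\delta$ over the random variables used to update the buffer, \[ \mathfrak{R}_n\le\mathfrak{R}^{\mathrm{buf}}_n+C_d\,(n-1)\cdot O\!\left(\sqrt{\frac{\log\frac n\delta}{s}}\right), \] where $\mathfrak{R}_n=\sum_{t=2}^n\hat{\mathcal{L}}_t(h_{t-1})-\inf_{h\in\mathcal{H}}\sum_{t=2}^n\hat{\mathcal{L}}_t(h)$ and $\mathfrak{R}^{\mathrm{buf}}_n=\sum_{t=2}^n\hat{\mathcal{L}}^{\mathrm{buf}}_t(h_{t-1})-\inf_{h\in\mathcal{H}}\sum_{t=2}^n\hat{\mathcal{L}}^{\mathrm{buf}}_t(h)$.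
   Context: All-pairs penalty $\hat{\mathcal{L}}_t(h)=\frac1{t-1}\sum_{\tau=1}^{t-1}\ell(h,z_t,z_\tau)$; buffer penalty $\hat{\mathcal{L}}^{\mathrm{buf}}_t(h)=\frac1{|B_t|}\sum_{z\in B_t}\ell(h,z_t,z)$, with $B_t$ the buffer after processing $z_1,\dots,z_{t-1}$. RS-x update with the point $z_t$ at step $t$: if $|B|<s$, add $z_t$; else if $t=s+1$, replace $B$ by $s$ points sampled uniformly with replacement from $B\cup\{z_t\}$; else independently replace each buffer entry by $z_t$ with probability $1/t$. $\mathcal{R}_s(\ell\circ\mathcal{H})=\mathbb{E}[\sup_h\frac1s\sum_{j=1}^s\epsilon_j\ell(h,z,z_j)]$; $C_d$ is its dependence on the input dimension $d$; $O(\cdot)$ hides constants such as $B$. The infimum over $\mathcal{H}$ of $\sum_t\hat{\mathcal{L}}_t$ is assumed attained. *)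

(* Defs.v *)
From HB Require Import structures.
From mathcomp Require Import all_boot all_order all_algebra.
From mathcomp Require Import boolp classical_sets reals exp.
Set Implicit Arguments. Unset Strict Implicit. Unset Printing Implicit Defensive.
Import Order.TTheory GRing.Theory Num.Theory.
Local Open Scope ring_scope.
Local Open Scope classical_set_scope.

Section Pairwise.
Variables (R : realType) (Z H : Type) (loss : H -> Z -> Z -> R).

(* Rademacher complexity R_s(l o H) at a fixed first argument z, for the
   distribution of the z_j being the uniform (empirical) distribution over a
   finite nonempty sample S : 'I_m -> Z:
   E_{z_j ~ unif S iid, eps uniform +-1} [ sup_h 1/s sum_j eps_j l(h,z,z_j) ]. *)
Definition rademacher (s m : nat) (S : 'I_m -> Z) (z : Z) : R :=
  (m%:R ^+ s)^-1 * (2%:R ^+ s)^-1 *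
  \sum_(zs : {ffun 'I_s -> 'I_m}) \sum_(eps : {ffun 'I_s -> bool})
     sup (range (fun h : H =>
        s%:R^-1 * \sum_(j < s) ((if eps j then 1 else -1) * loss h z (S (zs j))))).

(* Randomness used by RS-x on a stream of length n with buffer size s:
   - the s indices drawn uniformly with replacement from B u {z_t} at t = s+1,
   - for each step t and buffer entry j, a rsx_coin of bias 1/t. *)
Definition rsx_omega (n s : nat) : finType :=
  ({ffun 'I_s -> 'I_s.+1} * {ffun 'I_n.+1 -> {ffun 'I_s -> bool}})%type.

Definition coin_weight (t : nat) (b : bool) : R :=
  if b then t%:R^-1 else 1 - t%:R^-1.

Definition rsx_weight (n s : nat) (w : rsx_omega n s) : R :=
  (\prod_(j < s) (s.+1)%:R^-1) *
  \prod_(t < n.+1) \prod_(j < s) coin_weight t (w.2 t j).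

Definition rsx_Prob (n s : nat) (E : pred (rsx_omega n s)) : R :=
  \sum_(w : rsx_omega n s | E w) rsx_weight w.

Variables (n s : nat) (z : nat -> Z) (w : rsx_omega n s).

Definition rsx_coin (t : nat) (j : 'I_s) : bool := w.2 (inord t) j.

Definition rsx_update (B : seq Z) (t : nat) : seq Z :=
  if (size B < s)%N then rcons B (z t)
  else if (t == s.+1)%N then
    [seq nth (z t) (rcons B (z t)) (w.1 j) | j <- enum 'I_s]
  else [seq (if rsx_coin t j then z t else nth (z t) B j) | j <- enum 'I_s].

(* rsx_buf t = B_t, the buffer after processing z_1, ..., z_{t-1} *)
Fixpoint rsx_buf (t : nat) : seq Z :=
  match t with
  | 0 => [::]
  | t'.+1 => if t' == 0%N then [::] else rsx_update (rsx_buf t') t'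
  end.

Definition allpairs_pen (t : nat) (h : H) : R :=
  (t.-1)%:R^-1 * \sum_(1 <= tau < t) loss h (z t) (z tau).

Definition bufpen (t : nat) (h : H) : R :=
  (size (rsx_buf t))%:R^-1 * \sum_(x <- rsx_buf t) loss h (z t) x.

Definition regret (hs : nat -> H) : R :=
  \sum_(2 <= t < n.+1) allpairs_pen t (hs t.-1)
  - inf (range (fun h => \sum_(2 <= t < n.+1) allpairs_pen t h)).

Definition regret_buf (hs : nat -> H) : R :=
  \sum_(2 <= t < n.+1) bufpen t (hs t.-1)
  - inf (range (fun h => \sum_(2 <= t < n.+1) bufpen t h)).

End Pairwise.

(* Main.v *)
Require Import Defs.
From HB Require Import structures.
From mathcomp Require Import all_boot all_order all_algebra.
From mathcomp Require Import boolp classical_sets reals exp.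
From mathcomp Require Import sequences ring lra.
Set Implicit Arguments. Unset Strict Implicit. Unset Printing Implicit Defensive.
Import Order.TTheory GRing.Theory Num.Theory.
Local Open Scope ring_scope.
Local Open Scope classical_set_scope.

Section SupInf.
Variables (R : realType) (T : Type).
Implicit Types (f : T -> R).

Lemma sup_range_ub f M : (forall x, f x <= M) -> forall x, f x <= sup (range f).
Proof.
move=> hM x; apply: ub_le_sup; last by exists x.
by exists M => y [x' _ <-].
Qed.

Lemma sup_range_le f b (x0 : T) : (forall x, f x <= b) -> sup (range f) <= b.
Proof.
move=> hb; apply: ge_sup; first by exists (f x0), x0.
by move=> y [x' _ <-].
Qed.

Lemma inf_range_lb f M : (forall x, M <= f x) -> forall x, inf (range f) <= f x.
Proof.
move=> hM x; apply: ge_inf; last by exists x.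
by exists M => y [x' _ <-].
Qed.

Lemma inf_range_ge f b (x0 : T) : (forall x, b <= f x) -> b <= inf (range f).
Proof.
move=> hb; apply: lb_le_inf; first by exists (f x0), x0.
by move=> y [x' _ <-].
Qed.
End SupInf.

Section ExpFacts.
Variable R : realType.
Lemma expR_le_inv (y : R) : y < 1 -> expR y <= (1 - y)^-1.
Proof.
move=> hy.
have h1 : 1 - y <= expR (- y) by have := expR_ge1Dx (- y); rewrite addrC.
rewrite -[expR y]invrK -expRN lef_pV2 ?posrE ?expR_gt0 //; lra.
Qed.

Lemma expR_quad (y : R) : `|y| <= 2^-1 -> expR y <= 1 + y + 2 * y ^+ 2.
Proof.
move=> hy; have [hy1 hy2] : - 2^-1 <= y /\ y <= 2^-1.
  by split; move: hy; rewrite ler_norml => /andP[].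
have hl : expR y <= (1 - y)^-1 by apply: expR_le_inv; lra.
apply: (le_trans hl).
have hpos : 0 < 1 - y by lra.
rewrite -(ler_pM2l hpos) mulrV ?unitfE ?gt_eqF //.
have : 0 <= y ^+ 2 * (1 - 2 * y) by apply: mulr_ge0; [exact: sqr_ge0| lra].
move=> h; nra.
Qed.
End ExpFacts.

Section Avg.
Variable R : realType.
Definition avg {T : finType} (f : T -> R) : R := (#|T|%:R)^-1 * \sum_x f x.

Variable T : finType.
Implicit Types f g : T -> R.

Lemma avg_cst a : (0 < #|T|)%N -> avg (fun _ : T => a) = a.
Proof.
move=> hT; rewrite /avg sumr_const.
rewrite (@eq_card T (fun _ => true) T) //.
by rewrite -[a *+ #|T|]mulr_natr mulrC -mulrA mulfV ?mulr1 // pnatr_eq0 -lt0n.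
Qed.

Lemma avgD f g : avg (fun x => f x + g x) = avg f + avg g.
Proof. by rewrite /avg big_split mulrDr. Qed.

Lemma avgZ a f : avg (fun x => a * f x) = a * avg f.
Proof. by rewrite /avg -mulr_sumr mulrCA. Qed.

Lemma avgN f : avg (fun x => - f x) = - avg f.
Proof. by rewrite /avg sumrN mulrN. Qed.

Lemma avgB f g : avg (fun x => f x - g x) = avg f - avg g.
Proof. by rewrite avgD avgN. Qed.

Lemma ler_avg f g : (forall x, f x <= g x) -> avg f <= avg g.
Proof.
move=> h; rewrite /avg ler_wpM2l ?invr_ge0 ?ler0n //.
by apply: ler_sum => x _; exact: h.
Qed.

Lemma avg_ge0 f : (forall x, 0 <= f x) -> 0 <= avg f.
Proof. by move=> h; rewrite /avg mulr_ge0 ?invr_ge0 ?ler0n ?sumr_ge0. Qed.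

Lemma avg_le_cst f c : (0 < #|T|)%N -> (forall x, f x <= c) -> avg f <= c.
Proof. by move=> hT h; rewrite -(avg_cst c hT); apply: ler_avg. Qed.

Lemma avg_ge_cst f c : (0 < #|T|)%N -> (forall x, c <= f x) -> c <= avg f.
Proof. by move=> hT h; rewrite -(avg_cst c hT); apply: ler_avg. Qed.

Lemma avg_norm_le f c : (0 < #|T|)%N -> (forall x, `|f x| <= c) -> `|avg f| <= c.
Proof.
move=> hT h; rewrite ler_norml; apply/andP; split.
  rewrite lerNl -avgN; apply: avg_le_cst => // x.
  by have := h x; rewrite ler_norml => /andP[h1 _]; rewrite lerNl.
by apply: avg_le_cst => // x; have := h x; rewrite ler_norml => /andP[_ ->].
Qed.

Lemma hoeffding_step (X : T -> R) c l : (0 < #|T|)%N -> avg X = 0 ->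
  (forall x, `|X x| <= c) -> 0 <= l -> l * c <= 2^-1 ->
  avg (fun x => expR (l * X x)) <= expR (2 * l ^+ 2 * c ^+ 2).
Proof.
move=> hT h0 hX hl hlc.
have hpt : forall x, expR (l * X x) <= (1 + 2 * l ^+ 2 * c ^+ 2) + l * X x.
  move=> x; have hx := hX x.
  have hn : `|l * X x| <= 2^-1.
    rewrite normrM ger0_norm //; apply: (le_trans _ hlc); exact: ler_wpM2l.
  apply: (le_trans (expR_quad hn)).
  have : (l * X x) ^+ 2 <= l ^+ 2 * c ^+ 2.
    rewrite exprMn ler_wpM2l ?sqr_ge0 //.
    rewrite -[X x ^+ 2]real_normK ?num_real //; apply: lerXn2r => //;
      rewrite ?nnegrE ?normr_ge0 //; exact: le_trans (normr_ge0 _) hx.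
  move=> h; lra.
apply: (le_trans (ler_avg hpt)); rewrite avgD avgZ h0 mulr0 addr0 avg_cst //.
exact: expR_ge1Dx.
Qed.
End Avg.

Section McD.
Variables (R : realType) (m : nat).

Definition ffcons s (x : 'I_m) (g : {ffun 'I_s -> 'I_m}) : {ffun 'I_s.+1 -> 'I_m} :=
  [ffun i => if unlift ord0 i is Some i' then g i' else x].
Definition fftail s (f : {ffun 'I_s.+1 -> 'I_m}) : {ffun 'I_s -> 'I_m} :=
  [ffun i => f (lift ord0 i)].

Lemma ffcons0 s x (g : {ffun 'I_s -> 'I_m}) : ffcons x g ord0 = x.
Proof. by rewrite ffunE unlift_none. Qed.

Lemma ffconsS s x (g : {ffun 'I_s -> 'I_m}) i : ffcons x g (lift ord0 i) = g i.
Proof. by rewrite ffunE liftK. Qed.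

Lemma sum_ffcons s (F : {ffun 'I_s.+1 -> 'I_m} -> R) :
  \sum_f F f = \sum_x \sum_g F (ffcons x g).
Proof.
rewrite pair_big /=.
rewrite (reindex (fun p : 'I_m * {ffun 'I_s -> 'I_m} => ffcons p.1 p.2)) //=.
exists (fun f : {ffun 'I_s.+1 -> 'I_m} => (f ord0, fftail f)) => [[x g] _|f _] /=.
  rewrite ffcons0; congr pair; apply/ffunP => i; by rewrite ffunE ffconsS.
apply/ffunP => i; rewrite ffunE; case: (unliftP ord0 i) => [j ->|->] //=.
by rewrite ffunE.
Qed.

Lemma card_ff s : #|{ffun 'I_s -> 'I_m}| = (m ^ s)%N.
Proof. by rewrite card_ffun !card_ord. Qed.

Lemma avg_ffcons s (F : {ffun 'I_s.+1 -> 'I_m} -> R) :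
  avg F = avg (fun g : {ffun 'I_s -> 'I_m} => avg (fun x => F (ffcons x g))).
Proof.
rewrite /avg sum_ffcons exchange_big /= mulr_sumr !card_ff card_ord expnS natrM.
rewrite invfM mulr_sumr; apply: eq_bigr => g _.
by rewrite mulrA [X in X * _]mulrC.
Qed.

Definition bdiff s (f : {ffun 'I_s -> 'I_m} -> R) (c : R) :=
  forall k k' : {ffun 'I_s -> 'I_m}, forall (j0 : 'I_s), (forall j, j != j0 -> k j = k' j) -> `|f k - f k'| <= c.

Lemma mcdiarmid_mgf s (f : {ffun 'I_s -> 'I_m} -> R) c l :
  (0 < m)%N -> 0 <= c -> 0 <= l -> l * c <= 2^-1 -> bdiff f c ->
  avg (fun k => expR (l * (f k - avg f))) <= expR (2 * s%:R * l ^+ 2 * c ^+ 2).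
Proof.
move=> hm hc hl hlc; elim: s f => [|s IH] f hf.
  have hk : forall k k' : {ffun 'I_0 -> 'I_m}, k = k' by move=> k k'; apply/ffunP => -[].
  have hcard : (0 < #|{ffun 'I_0 -> 'I_m}|)%N by rewrite card_ff.
  set k0 : {ffun 'I_0 -> 'I_m} := [ffun => Ordinal hm].
  have -> : avg f = f k0.
    by rewrite -(avg_cst (f k0) hcard); congr avg; apply: funext => k; rewrite (hk k k0).
  rewrite mulr0n !mulr0 !mul0r.
  apply: avg_le_cst => // k; rewrite (hk k k0) subrr mulr0 //.
have hcard : (0 < #|{ffun 'I_s -> 'I_m}|)%N by rewrite card_ff expn_gt0 hm.
have hcardm : (0 < #|'I_m|)%N by rewrite card_ord.
pose G (g : {ffun 'I_s -> 'I_m}) := avg (fun x => f (ffcons x g)).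
have hE : avg f = avg G by rewrite avg_ffcons.
have hG : bdiff G c.
  move=> g g' j0 hj; rewrite /G -avgB; apply: avg_norm_le => // x.
  apply: hf (lift ord0 j0) _ => j hjj.
  rewrite !ffunE; case: (unliftP ord0 j) hjj => [j' ->|->] //= hjj.
  by apply: hj; apply: contra hjj => /eqP ->.
rewrite avg_ffcons hE.
have step : forall g, avg (fun x => expR (l * (f (ffcons x g) - avg G))) <=
    expR (2 * l ^+ 2 * c ^+ 2) * expR (l * (G g - avg G)).
  move=> g.
  have -> : (fun x => expR (l * (f (ffcons x g) - avg G))) =
      (fun x => expR (l * (G g - avg G)) * expR (l * (f (ffcons x g) - G g))).
    apply: funext => x; rewrite -expRD; congr expR; ring.
  rewrite avgZ mulrC ler_wpM2r ?expR_ge0 //.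
  apply: hoeffding_step => //.
    by rewrite avgB avg_cst // subrr.
  move=> x; rewrite /G -[f (ffcons x g)](avg_cst _ hcardm) -avgB.
  apply: avg_norm_le => // y; apply: hf ord0 _ => j hj.
  rewrite !ffunE; case: (unliftP ord0 j) hj => [j' ->|->] //=.
apply: (le_trans (ler_avg step)); rewrite avgZ.
apply: (le_trans (ler_wpM2l (expR_ge0 _) (IH G hG))).
rewrite -expRD (_ : _ + _ = 2 * s.+1%:R * l ^+ 2 * c ^+ 2) //.
rewrite -addn1 natrD; ring.
Qed.
End McD.

Section Tail.
Variables (R : realType) (m : nat).

Lemma sup_range_diff (T : Type) (f1 f2 : T -> R) M c (x0 : T) :
  (forall h, `|f1 h| <= M) -> (forall h, `|f2 h| <= M) ->
  (forall h, `|f1 h - f2 h| <= c) ->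
  `|sup (range f1) - sup (range f2)| <= c.
Proof.
move=> h1 h2 h12.
have b1 : forall h, f1 h <= M by move=> h; exact: le_trans (ler_norm _) (h1 h).
have b2 : forall h, f2 h <= M by move=> h; exact: le_trans (ler_norm _) (h2 h).
have u1 := sup_range_ub b1; have u2 := sup_range_ub b2.
have s1 : sup (range f1) <= sup (range f2) + c.
  apply: sup_range_le x0 _ => h.
  have := h12 h; rewrite ler_norml => /andP[ha hb].
  have := u2 h; lra.
have s2 : sup (range f2) <= sup (range f1) + c.
  apply: sup_range_le x0 _ => h.
  have := h12 h; rewrite ler_norml => /andP[ha hb].
  have := u1 h; lra.
rewrite ler_norml; apply/andP; split; lra.
Qed.

Definition ind (b : bool) : R := if b then 1 else 0.

Lemma mcdiarmid_tail s (f : {ffun 'I_s -> 'I_m} -> R) Bp u :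
  (0 < m)%N -> (0 < s)%N -> 0 < Bp -> bdiff f (Bp / s%:R) ->
  (forall k, `|f k| <= Bp) -> 0 <= u ->
  avg (fun k => ind (u <= f k - avg f)) <= expR (- (u ^+ 2 * s%:R / (8 * Bp ^+ 2))).
Proof.
move=> hm hs hBp hf hb hu.
have hcard : (0 < #|{ffun 'I_s -> 'I_m}|)%N by rewrite card_ff expn_gt0 hm.
have hsR : 0 < s%:R :> R by rewrite ltr0n.
have hab : `|avg f| <= Bp by apply: avg_norm_le.
have [hu2|hu2] := leP u (2 * Bp); last first.
  apply: (le_trans _ (ltW (expR_gt0 _))); apply: avg_le_cst => // k.
  rewrite /ind; case: ifP => // hk; exfalso.
  have := hb k; rewrite ler_norml => /andP[_ h1].
  move: hab; rewrite ler_norml => /andP[h2 _].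
  move: hk; rewrite /is_true => hk; have := hk; lra.
pose l := u * s%:R / (4 * Bp ^+ 2).
have hl : 0 <= l by rewrite /l divr_ge0 ?mulr_ge0 ?ler0n ?sqr_ge0 //; lra.
have hc : 0 <= Bp / s%:R by rewrite divr_ge0 //; lra.
have hlc : l * (Bp / s%:R) <= 2^-1.
  have -> : l * (Bp / s%:R) = u / (4 * Bp) by rewrite /l; field; lra.
  rewrite ler_pdivrMr; lra.
have hpt : forall k, ind (u <= f k - avg f) <=
    expR (- (l * u)) * expR (l * (f k - avg f)).
  move=> k; rewrite -expRD /ind; case: ifP => hk.
    have : 0 <= - (l * u) + l * (f k - avg f).
      by rewrite -mulrN -mulrDr mulr_ge0 // addrC subr_ge0.
    move=> h; apply: le_trans (expR_ge1Dx _); lra.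
  exact: expR_ge0.
apply: (le_trans (ler_avg hpt)); rewrite avgZ.
apply: (le_trans (ler_wpM2l (expR_ge0 _) (mcdiarmid_mgf hm hc hl hlc hf))).
rewrite -expRD (_ : _ + _ = - (u ^+ 2 * s%:R / (8 * Bp ^+ 2))) //.
rewrite /l; field; lra.
Qed.
End Tail.

Section AvgMore.
Variable R : realType.

Lemma avg_exch (T1 T2 : finType) (F : T1 -> T2 -> R) :
  avg (fun a => avg (fun b => F a b)) = avg (fun b => avg (fun a => F a b)).
Proof.
rewrite /avg -!mulr_sumr mulrCA; congr (_ * (_ * _)); exact: exchange_big.
Qed.

Lemma avg_pair (T1 T2 : finType) (F : T1 -> T2 -> R) :
  avg (fun a => avg (fun b => F a b)) = avg (fun p : T1 * T2 => F p.1 p.2).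
Proof.
rewrite /avg -mulr_sumr mulrA card_prod natrM invfM [_^-1 * _^-1]mulrC.
by rewrite pair_big.
Qed.

Lemma avg_reindex (T : finType) (g g' : T -> T) (F : T -> R) :
  cancel g g' -> avg (fun x => F (g x)) = avg F.
Proof.
move=> gK; rewrite /avg; congr (_ * _).
by rewrite [RHS](reindex_inj (can_inj gK)).
Qed.

Lemma avg_sum (T I : finType) (F : I -> T -> R) :
  avg (fun x => \sum_i F i x) = \sum_i avg (F i).
Proof. by rewrite /avg exchange_big mulr_sumr. Qed.
End AvgMore.

Section Sym.
Variables (R : realType) (Z H : Type) (loss : H -> Z -> Z -> R) (B : R) (x : Z).
Variables (m s : nat) (S : 'I_m -> Z) (h0 : H).
Hypotheses (hB : forall h a b, 0 <= loss h a b <= B) (hm : (0 < m)%N) (hs : (0 < s)%N).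

Local Notation U := {ffun 'I_s -> 'I_m}.
Local Notation E := {ffun 'I_s -> bool}.

Definition Lb (k : U) (h : H) : R := s%:R^-1 * \sum_(j < s) loss h x (S (k j)).
Definition La (h : H) : R := m%:R^-1 * \sum_(i < m) loss h x (S i).

Lemma mean_le n (g : 'I_n -> R) c : (0 < n)%N -> (forall j, g j <= c) ->
  n%:R^-1 * \sum_(j < n) g j <= c.
Proof.
move=> hn hg; have hnR : 0 < n%:R :> R by rewrite ltr0n.
rewrite ler_pdivrMl //; apply: le_trans (ler_sum _ (fun j _ => hg j)) _.
by rewrite sumr_const card_ord mulr_natl.
Qed.

Lemma mean_ge n (g : 'I_n -> R) c : (0 < n)%N -> (forall j, c <= g j) ->
  c <= n%:R^-1 * \sum_(j < n) g j.
Proof.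
move=> hn hg; have hnR : 0 < n%:R :> R by rewrite ltr0n.
rewrite ler_pdivlMl //; apply: le_trans _ (ler_sum _ (fun j _ => hg j)).
by rewrite sumr_const card_ord mulr_natl.
Qed.

Lemma Lb_ge0 k h : 0 <= Lb k h.
Proof. by apply: mean_ge => // j; case/andP: (hB h x (S (k j))). Qed.
Lemma Lb_leB k h : Lb k h <= B.
Proof. by apply: mean_le => // j; case/andP: (hB h x (S (k j))). Qed.
Lemma La_ge0 h : 0 <= La h.
Proof. by apply: mean_ge => // j; case/andP: (hB h x (S j)). Qed.
Lemma La_leB h : La h <= B.
Proof. by apply: mean_le => // j; case/andP: (hB h x (S j)). Qed.

Lemma marginal (j : 'I_s) (phi : 'I_m -> R) : avg (fun k : U => phi (k j)) = avg phi.
Proof.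
have e : \sum_(k : U) phi (k j) =
    \prod_(j' < s) \sum_(y < m) (if j' == j then phi y else 1).
  rewrite bigA_distr_bigA /=; apply: eq_bigr => k _.
  rewrite (bigD1 j) //= eqxx big1 ?mulr1 // => j' hj'; by rewrite (negbTE hj').
rewrite /avg e (bigD1 j) //= eqxx.
have e2 : \prod_(j' < s | j' != j) (\sum_(y < m) (if j' == j then phi y else 1))
    = m%:R ^+ s.-1.
  rewrite (eq_bigr (fun _ => m%:R)); last first.
    by move=> j' hj'; rewrite (negbTE hj') sumr_const card_ord.
  by rewrite prodr_const cardC1 card_ord.
rewrite e2 card_ff card_ord natrX.
have hm0 : m%:R ^+ s.-1 != 0 :> R by rewrite expf_neq0 // pnatr_eq0 -lt0n.
rewrite -{1}(prednK hs) exprS invfM mulrCA -mulrA mulVf // mulr1 mulrC //.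
Qed.

Lemma avg_Lb h : avg (fun k : U => Lb k h) = La h.
Proof.
rewrite /Lb avgZ avg_sum (eq_bigr (fun _ => avg (fun i => loss h x (S i)))).
  have hs0 : s%:R != 0 :> R by rewrite pnatr_eq0 -lt0n.
  by rewrite sumr_const card_ord -[avg _ *+ s]mulr_natl mulrA mulVf // mul1r /avg card_ord.
by move=> j _; rewrite (marginal j (fun i => loss h x (S i))).
Qed.

Definition Dp (k : U) := sup (range (fun h => La h - Lb k h)).
Definition Dm (k : U) := sup (range (fun h => Lb k h - La h)).

Lemma Dp_norm k : `|Dp k| <= B.
Proof.
have hb : forall h, La h - Lb k h <= B.
  by move=> h; have := La_leB h; have := Lb_ge0 k h; lra.
rewrite ler_norml; apply/andP; split; last exact: sup_range_le h0 _.
apply: le_trans (sup_range_ub hb h0).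
by have := La_ge0 h0; have := Lb_leB k h0; lra.
Qed.

Lemma Dm_norm k : `|Dm k| <= B.
Proof.
have hb : forall h, Lb k h - La h <= B.
  by move=> h; have := Lb_leB k h; have := La_ge0 h; lra.
rewrite ler_norml; apply/andP; split; last exact: sup_range_le h0 _.
apply: le_trans (sup_range_ub hb h0).
by have := Lb_ge0 k h0; have := La_leB h0; lra.
Qed.

Lemma Lb_diff (k k' : U) (j0 : 'I_s) : (forall j, j != j0 -> k j = k' j) ->
  forall h, `|Lb k h - Lb k' h| <= B / s%:R.
Proof.
move=> hj h; rewrite /Lb -mulrBr -sumrB (bigD1 j0) //= big1 ?addr0; last first.
  by move=> j /hj ->; rewrite subrr.
rewrite normrM ger0_norm ?invr_ge0 ?ler0n // mulrC ler_wpM2r ?invr_ge0 ?ler0n //.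
case/andP: (hB h x (S (k j0))) => a1 a2; case/andP: (hB h x (S (k' j0))) => b1 b2.
rewrite ler_norml; apply/andP; split; lra.
Qed.

Lemma Dp_bdiff : bdiff Dp (B / s%:R).
Proof.
move=> k k' j0 hj; apply: (sup_range_diff (M := B)) h0 _ _ _.
- move=> h; have := La_leB h; have := Lb_ge0 k h; have := La_ge0 h;
  have := Lb_leB k h; rewrite ler_norml; lra.
- move=> h; have := La_leB h; have := Lb_ge0 k' h; have := La_ge0 h;
  have := Lb_leB k' h; rewrite ler_norml; lra.
move=> h; have := Lb_diff hj h; rewrite !ler_norml; lra.
Qed.

Lemma Dm_bdiff : bdiff Dm (B / s%:R).
Proof.
move=> k k' j0 hj; apply: (sup_range_diff (M := B)) h0 _ _ _.
- move=> h; have := La_leB h; have := Lb_ge0 k h; have := La_ge0 h;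
  have := Lb_leB k h; rewrite ler_norml; lra.
- move=> h; have := La_leB h; have := Lb_ge0 k' h; have := La_ge0 h;
  have := Lb_leB k' h; rewrite ler_norml; lra.
move=> h; have := Lb_diff hj h; rewrite !ler_norml; lra.
Qed.


Definition sg (b : bool) : R := if b then 1 else -1.
Definition Rad (eps : E) (k : U) :=
  sup (range (fun h => s%:R^-1 * \sum_(j < s) (sg (eps j) * loss h x (S (k j))))).

Lemma hU : (0 < #|U|)%N.
Proof. by rewrite card_ff expn_gt0 hm. Qed.
Lemma hE : (0 < #|E|)%N.
Proof. by rewrite card_ffun card_bool expn_gt0. Qed.

Lemma rad_eq : rademacher loss s S x = avg (fun k : U => avg (fun eps : E => Rad eps k)).
Proof.
rewrite /rademacher /avg card_ff card_ffun card_bool card_ord !natrX -mulrA mulr_sumr.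
by [].
Qed.

Definition Q (k k' : U) := sup (range (fun h => Lb k' h - Lb k h)).

Lemma bnd_diff k k' h : Lb k' h - Lb k h <= B.
Proof. by have := Lb_leB k' h; have := Lb_ge0 k h; lra. Qed.

Lemma avg_Dp_le : avg Dp <= avg (fun k => avg (fun k' => Q k k')).
Proof.
apply: ler_avg => k; apply: sup_range_le h0 _ => h.
rewrite -(avg_Lb h) -[Lb k h](avg_cst _ hU) -avgB.
apply: ler_avg => k'; exact: (sup_range_ub (fun h => bnd_diff k k' h) h).
Qed.

Lemma avg_Dm_le : avg Dm <= avg (fun k => avg (fun k' => Q k' k)).
Proof.
apply: ler_avg => k; apply: sup_range_le h0 _ => h.
rewrite -(avg_Lb h) -[Lb k h](avg_cst _ hU) -avgB.
apply: ler_avg => k'; exact: (sup_range_ub (fun h => bnd_diff k' k h) h).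
Qed.

Definition sw (eps : E) (p : U * U) : U * U :=
  ([ffun j => if eps j then p.1 j else p.2 j], [ffun j => if eps j then p.2 j else p.1 j]).

Lemma swK eps : cancel (sw eps) (sw eps).
Proof.
move=> [a b]; rewrite /sw /=; congr pair; apply/ffunP => j; rewrite !ffunE;
  by case: (eps j).
Qed.

Definition Qe (eps : E) (k k' : U) := sup (range (fun h => s%:R^-1 *
  \sum_(j < s) (sg (eps j) * (loss h x (S (k' j)) - loss h x (S (k j)))))).

Lemma Q_sw eps p : Q (sw eps p).1 (sw eps p).2 = Qe eps p.1 p.2.
Proof.
rewrite /Q /Qe /Lb; do 2 f_equal; apply: funext => h.
rewrite -mulrBr -sumrB; congr (_ * _); apply: eq_bigr => j _.
rewrite /sw /= !ffunE /sg; case: (eps j) => /=; ring.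
Qed.

Lemma avgQ_eps eps : avg (fun k => avg (fun k' => Q k k')) =
  avg (fun k => avg (fun k' => Qe eps k k')).
Proof.
rewrite !avg_pair -(avg_reindex (fun p : U * U => Q p.1 p.2) (swK eps)).
by congr avg; apply: funext => p; exact: Q_sw.
Qed.

Definition negf (eps : E) : E := [ffun j => ~~ eps j].
Lemma negfK : cancel negf negf.
Proof. by move=> e; apply/ffunP => j; rewrite !ffunE negbK. Qed.

Lemma B_ge0 : 0 <= B.
Proof. by case/andP: (hB h0 x x) => a b; exact: le_trans a b. Qed.

Lemma radb (eps : E) (k : U) h :
  s%:R^-1 * \sum_(j < s) (sg (eps j) * loss h x (S (k j))) <= B.
Proof.
apply: mean_le => // j; case/andP: (hB h x (S (k j))) => a b; have := B_ge0.
rewrite /sg; case: (eps j); lra.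
Qed.

Lemma Qe_le eps k k' : Qe eps k k' <= Rad eps k' + Rad (negf eps) k.
Proof.
apply: sup_range_le h0 _ => h.
have -> : s%:R^-1 * \sum_(j < s) (sg (eps j) * (loss h x (S (k' j)) - loss h x (S (k j))))
  = s%:R^-1 * \sum_(j < s) (sg (eps j) * loss h x (S (k' j)))
  + s%:R^-1 * \sum_(j < s) (sg (negf eps j) * loss h x (S (k j))).
  rewrite -mulrDr -big_split; congr (_ * _); apply: eq_bigr => j _.
  rewrite /negf ffunE /sg; case: (eps j) => /=; ring.
apply: lerD.
  exact: (sup_range_ub (fun h => radb eps k' h) h).
exact: (sup_range_ub (fun h => radb (negf eps) k h) h).
Qed.

Lemma sym_main : avg (fun k => avg (fun k' => Q k k')) <= 2 * rademacher loss s S x.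
Proof.
rewrite -[X in X <= _](avg_cst _ hE).
rewrite (_ : avg _ = avg (fun eps => avg (fun k => avg (fun k' => Qe eps k k')))); last first.
  by congr avg; apply: funext => eps; exact: avgQ_eps.
apply: le_trans (ler_avg (fun eps => ler_avg (fun k => ler_avg (fun k' => Qe_le eps k k')))) _.
have e1 : forall eps, avg (fun k => avg (fun k' => Rad eps k' + Rad (negf eps) k)) =
    avg (fun k' => Rad eps k') + avg (fun k => Rad (negf eps) k).
  move=> eps; rewrite (_ : (fun k => _) = fun k => avg (fun k' => Rad eps k') + Rad (negf eps) k).
    by rewrite avgD avg_cst // hU.
  by apply: funext => k; rewrite avgD avg_cst // hU.
rewrite (_ : (fun eps => _) = fun eps => avg (fun k' => Rad eps k') + avg (fun k => Rad (negf eps) k)); last first.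
  by apply: funext => eps; exact: e1.
rewrite avgD (avg_reindex (fun eps => avg (fun k => Rad eps k)) negfK).
rewrite -avg_exch -rad_eq; lra.
Qed.

Lemma avg_Dp_rad : avg Dp <= 2 * rademacher loss s S x.
Proof. exact: le_trans avg_Dp_le sym_main. Qed.

Lemma avg_Dm_rad : avg Dm <= 2 * rademacher loss s S x.
Proof. by apply: le_trans avg_Dm_le _; rewrite avg_exch; exact: sym_main. Qed.

End Sym.

Section RSX.
Variables (Z : Type) (n s : nat) (z : nat -> Z) (w : rsx_omega n s).
Hypothesis hs : (0 < s)%N.

Fixpoint idx (a : nat) (c : nat -> bool) (t : nat) : nat :=
  match t with
  | 0 => a.+1
  | t'.+1 => if (s.+2 <= t')%N && c t' then t' else idx a c t'
  end.

Definition bidx (j : 'I_s) t := idx (w.1 j) (fun tau => rsx_coin w tau j) t.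

Lemma idx_small a c t : (t <= s.+2)%N -> idx a c t = a.+1.
Proof.
elim: t => //= t IH ht.
have -> : (s.+2 <= t)%N = false by apply/negbTE; rewrite -ltnNge; exact: ht.
by apply: IH; exact: ltnW.
Qed.

Lemma idx_ge1 a c t : (1 <= idx a c t)%N.
Proof.
elim: t => //= t IH; case: ifP => // /andP[h _]; exact: leq_trans h.
Qed.

Lemma idx_lt a c t : (a < s.+1)%N -> (s.+2 <= t)%N -> (idx a c t < t)%N.
Proof.
move=> ha; elim: t => // t IH ht /=.
case: ifP => // /negbT hn.
have [h1|h1] := leqP (s.+2) t; first by apply: leq_trans (IH h1) _.
have -> : t.+1 = s.+2 by apply/eqP; rewrite eqn_leq ht h1.
by rewrite idx_small ?(ltnW h1).
Qed.

Lemma buf_small t : (1 <= t <= s.+1)%N -> rsx_buf z w t = map z (iota 1 t.-1).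
Proof.
elim: t => // t IH /andP[_ ht] /=.
case: (eqVneq t 0) => [-> //|t0].
have ht1 : (1 <= t <= s.+1)%N by rewrite lt0n t0 /= ltnW.
rewrite IH // /rsx_update size_map size_iota.
have -> : (t.-1 < s)%N by rewrite -ltnS prednK ?lt0n.
case: t IH ht t0 ht1 => [//|k] IH ht _ ht1.
change (k.+1.-1) with k.
by rewrite -map_rcons -cats1 -[in RHS](addn1 k) iotaD add1n.
Qed.

Lemma nth_rcons_iota (T : Type) (f : nat -> T) k d (i : 'I_k.+1) :
  nth d (rcons (map f (iota 1 k)) (f k.+1)) i = f i.+1.
Proof.
have e : rcons (iota 1 k) k.+1 = iota 1 k.+1
  by rewrite -cats1 -[in RHS](addn1 k) iotaD add1n.
by rewrite -map_rcons e (nth_map 0%N) ?size_iota ?ltn_ord // nth_iota ?ltn_ord.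
Qed.

Lemma buf_big t : (s.+2 <= t)%N ->
  rsx_buf z w t = [seq z (bidx j t) | j <- enum 'I_s].
Proof.
elim: t => // t IH ht /=.
have t0 : t != 0%N by move: ht; case: t IH.
rewrite (negbTE t0).
have [h1|h1] := leqP (s.+2) t.
  rewrite IH // /rsx_update size_map size_enum_ord ltnn.
  have -> : (t == s.+1) = false by apply/negbTE; rewrite neq_ltn h1 orbT.
  apply: eq_map => j.
  rewrite (nth_map j) ?size_enum_ord ?ltn_ord // nth_ord_enum /bidx /= h1 /=.
  by case: (rsx_coin w t j).
have et : t = s.+1 by apply/eqP; rewrite eqn_leq; apply/andP; split; [exact: h1|exact: ht].
rewrite et buf_small; last by rewrite leqnn.
rewrite /rsx_update size_map size_iota ltnn eqxx /=.
apply: eq_map => j; rewrite /bidx idx_small //.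
by rewrite nth_rcons_iota.
Qed.

Lemma bufpen_small (R : realType) H (loss : H -> Z -> Z -> R) t h : (1 <= t <= s.+1)%N ->
  bufpen loss z w t h = allpairs_pen loss z t h.
Proof.
move=> ht; rewrite /bufpen /allpairs_pen buf_small // size_map size_iota big_map.
by rewrite /index_iota subn1.
Qed.

Lemma bufpen_big (R : realType) H (loss : H -> Z -> Z -> R) t h : (s.+2 <= t)%N ->
  bufpen loss z w t h = s%:R^-1 * \sum_(j < s) loss h (z t) (z (bidx j t)).
Proof.
move=> ht; rewrite /bufpen buf_big // size_map size_enum_ord big_map.
by rewrite big_enum.
Qed.
End RSX.

Section Dist.
Variables (R : realType) (n s : nat).
Hypothesis hs : (0 < s)%N.

Local Notation Om := (rsx_omega n s).
Local Notation CT := {ffun 'I_n.+1 -> bool}.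

Lemma sum_factor (G : 'I_s -> 'I_s.+1 -> CT -> R) :
  \sum_(w : Om) \prod_j G j (w.1 j) [ffun tau => w.2 tau j] =
  \prod_j \sum_a \sum_C G j a C.
Proof.
transitivity (\sum_(w1 : {ffun 'I_s -> 'I_s.+1})
   \sum_(w2 : {ffun 'I_n.+1 -> {ffun 'I_s -> bool}})
     \prod_j G j (w1 j) [ffun tau => w2 tau j]).
  by rewrite pair_big.
rewrite bigA_distr_bigA; apply: eq_bigr => w1 _.
rewrite bigA_distr_bigA.
rewrite (reindex (fun W : {ffun 'I_s -> CT} => [ffun tau => [ffun j => W j tau]])) /=.
  apply: eq_bigr => W _; apply: eq_bigr => j _; congr (G _ _ _).
  by apply/ffunP => tau; rewrite !ffunE.
exists (fun w2 : {ffun 'I_n.+1 -> {ffun 'I_s -> bool}} => [ffun j => [ffun tau => w2 tau j]]).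
  by move=> W _; apply/ffunP => j; apply/ffunP => tau; rewrite !ffunE.
by move=> w2 _; apply/ffunP => tau; apply/ffunP => j; rewrite !ffunE.
Qed.

Definition cw (t : nat) (b : bool) : R := coin_weight R t b.

Lemma weight_factor (w : Om) :
  rsx_weight R w = \prod_j ((s.+1)%:R^-1 * \prod_(tau < n.+1) cw tau ([ffun t => w.2 t j] tau)).
Proof.
rewrite /rsx_weight big_split /=; congr (_ * _).
rewrite exchange_big /=; apply: eq_bigr => j _; apply: eq_bigr => tau _.
by rewrite ffunE.
Qed.

Lemma cw_sum t : cw t true + cw t false = 1.
Proof. by rewrite /cw /coin_weight addrC subrK. Qed.

Lemma cw_ge0 t b : 0 <= cw t b.
Proof.
rewrite /cw /coin_weight; case: b; first by rewrite invr_ge0 ler0n.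
case: t => [|t]; first by rewrite invr0 subr0.
by rewrite subr_ge0 invf_le1 ?ltr0n // ler1n.
Qed.

Lemma weight_ge0 (w : Om) : 0 <= rsx_weight R w.
Proof.
rewrite /rsx_weight mulr_ge0 //; apply: prodr_ge0 => *;
  rewrite ?invr_ge0 ?ler0n //; apply: prodr_ge0 => *; exact: cw_ge0.
Qed.

Lemma sum_coins : \sum_(C : CT) \prod_(tau < n.+1) cw tau (C tau) = 1.
Proof.
rewrite -(bigA_distr_bigA (fun (tau : 'I_n.+1) (b : bool) => cw tau b)) /=.
by apply: big1 => tau _; rewrite big_bool; exact: cw_sum.
Qed.

Lemma total_weight : \sum_(w : Om) rsx_weight R w = 1.
Proof.
under eq_bigr do rewrite weight_factor.
rewrite (sum_factor (fun j a C => (s.+1)%:R^-1 * \prod_(tau < n.+1) cw tau (C tau))).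
apply: big1 => j _.
rewrite (eq_bigr (fun _ => (s.+1)%:R^-1)); last first.
  by move=> a _; rewrite -mulr_sumr sum_coins mulr1.
by rewrite sumr_const card_ord -[(s.+1)%:R^-1 *+ _]mulr_natl mulfV // pnatr_eq0.
Qed.

Lemma prod_range (F : nat -> R) lo hi : (hi <= n.+1)%N ->
  \prod_(tau < n.+1) (if (lo <= tau < hi)%N then F tau else 1) =
  \prod_(lo <= tau < hi) F tau.
Proof.
elim: hi => [_|hi IH hhi].
  rewrite big_geq // big1 // => tau _; by rewrite andbF.
have hhi' : (hi < n.+1)%N by exact: hhi.
rewrite (bigD1 (Ordinal hhi')) //=.
have e : \prod_(tau < n.+1 | tau != Ordinal hhi')
      (if (lo <= tau < hi.+1)%N then F tau else 1) =
    \prod_(tau < n.+1) (if (lo <= tau < hi)%N then F tau else 1).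
  rewrite [RHS](bigD1 (Ordinal hhi')) //= ltnn andbF mul1r.
  apply: eq_bigr => tau htau.
  have hne : (nat_of_ord tau != hi).
    by apply: contra htau => /eqP h; apply/eqP; apply: val_inj.
  by rewrite [(tau < hi.+1)%N]ltnS [(tau <= hi)%N]leq_eqVlt (negbTE hne).
rewrite e (IH (ltnW hhi')) ltnSn andbT.
have [hl|hl] := leqP lo hi.
  by rewrite big_nat_recr //= mulrC.
rewrite mul1r !big_geq //; exact: ltnW.
Qed.

Lemma telescope lo hi : (2 <= lo <= hi)%N ->
  \prod_(lo <= tau < hi) (1 - tau%:R^-1) = (lo.-1)%:R / (hi.-1)%:R :> R.
Proof.
case/andP=> hlo; elim: hi => [|hi IH] hh.
  by move: hh; rewrite leqn0 => /eqP h; rewrite h in hlo.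
have [e|hl] := eqVneq lo hi.+1.
  rewrite e big_geq // mulfV // pnatr_eq0 -lt0n -ltnS -e //.
have hlh : (lo <= hi)%N by rewrite -ltnS ltn_neqAle hl hh.
rewrite big_nat_recr //= IH //.
have hi1 : (1 < hi)%N by exact: leq_trans hlo hlh.
have e : (hi%:R : R) = (hi.-1)%:R + 1 by rewrite natr1 prednK // ltnW.
have h1 : (hi.-1)%:R != 0 :> R by rewrite pnatr_eq0 -lt0n -ltnS prednK // ltnW.
have h2 : (hi.-1)%:R + 1 != 0 :> R by rewrite -e pnatr_eq0 -lt0n ltnW.
rewrite e; field.
by rewrite h1 h2.
Qed.

Definition ind' (b : bool) : R := if b then 1 else 0.

Definition alph (k0 a : nat) : R := if (s.+2 <= k0)%N then 1 else ind' (a.+1 == k0).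
Definition bet (t k0 tau : nat) (b : bool) : R :=
  if (tau == k0) && (s.+2 <= k0)%N then ind' b
  else if (maxn s.+2 k0.+1 <= tau < t)%N then ind' (~~ b) else 1.

Lemma idx_succ a c t : idx s a c t.+1 = if (s.+2 <= t)%N && c t then t else idx s a c t.
Proof. by []. Qed.

Lemma ind_prod_form (a : 'I_s.+1) (C : CT) d k0 :
  (s.+2 + d <= n.+1)%N -> (1 <= k0 < s.+2 + d)%N ->
  ind' (idx s a (fun tau => C (inord tau)) (s.+2 + d) == k0) =
  alph k0 a * \prod_(tau < n.+1) bet (s.+2 + d) k0 tau (C tau).
Proof.
elim: d k0 => [|d IH] k0 ht hk.
  rewrite addn0 in ht hk *.
  have hk0 : (s.+2 <= k0)%N = false.
    by apply/negbTE; rewrite -ltnNge; case/andP: hk.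
  rewrite idx_small // /alph hk0 big1 ?mulr1 // => tau _.
  rewrite /bet hk0 andbF.
  have -> : maxn s.+2 k0.+1 = s.+2.
    by apply/maxn_idPl; case/andP: hk.
  by case: ifP => // /andP[h1 h2]; move: (leq_trans h2 h1); rewrite ltnn.
rewrite addnS in ht hk *.
set t := (s.+2 + d)%N in ht hk IH *.
have htn : (t < n.+1)%N by exact: ht.
have hst : (s.+2 <= t)%N by rewrite /t leq_addr.
have hinord : inord t = Ordinal htn :> 'I_n.+1 by apply: val_inj; rewrite /= inordK.
rewrite idx_succ hst /= hinord.
have hlt := idx_lt (fun tau => C (inord tau)) (ltn_ord a) hst.
case/andP: hk => hk1 hk2.
rewrite (bigD1 (Ordinal htn)) //=.
have [ek|nek] := eqVneq k0 t.
  rewrite ek /alph hst /bet eqxx hst /= mul1r.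
  rewrite big1 ?mulr1; last first.
    move=> tau htau.
    have hne : (nat_of_ord tau == t) = false.
      by apply/negbTE; apply: contra htau => /eqP h; apply/eqP; apply: val_inj.
    rewrite hne /=; case: ifP => // /andP[h1 h2].
    have : (t.+1 <= tau)%N by apply: leq_trans h1; rewrite leq_max leqnn orbT.
    by rewrite leqNgt h2.
  case: (C (Ordinal htn)); first by rewrite eqxx.
  by rewrite /ind' (ltn_eqF hlt).
have hk2' : (k0 < t)%N by rewrite ltn_neqAle nek -ltnS.
have -> : (if C (Ordinal htn) then t else idx s a (fun tau => C (inord tau)) t) == k0
  = ~~ C (Ordinal htn) && (idx s a (fun tau => C (inord tau)) t == k0).
  by case: (C (Ordinal htn)) => //=; rewrite eq_sym (negbTE nek).
have -> : ind' (~~ C (Ordinal htn) && (idx s a (fun tau => C (inord tau)) t == k0)) =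
  ind' (~~ C (Ordinal htn)) * ind' (idx s a (fun tau => C (inord tau)) t == k0).
  by rewrite /ind'; case: (C _); case: (_ == _); rewrite ?mulr1 ?mulr0 ?mul0r.
rewrite IH //; last by rewrite hk1 hk2'.
rewrite (bigD1 (Ordinal htn)) //=.
have hbt : bet t.+1 k0 t (C (Ordinal htn)) = ind' (~~ C (Ordinal htn)).
  rewrite /bet eq_sym (negbTE nek) /= leqnn andbT geq_max hst /=.
  by rewrite hk2'.
have hbt' : bet t k0 t (C (Ordinal htn)) = 1.
  by rewrite /bet eq_sym (negbTE nek) /= ltnn andbF.
rewrite hbt hbt' mul1r.
have -> : \prod_(tau < n.+1 | tau != Ordinal htn) bet t.+1 k0 tau (C tau) =
    \prod_(tau < n.+1 | tau != Ordinal htn) bet t k0 tau (C tau).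
  apply: eq_bigr => tau htau.
  have hne : (nat_of_ord tau != t).
    by apply: contra htau => /eqP h; apply/eqP; apply: val_inj.
  by rewrite /bet [(tau < t.+1)%N]ltnS [(tau <= t)%N]leq_eqVlt (negbTE hne).
  by rewrite mulrCA.
exact: ltnW htn.
Qed.

Lemma prod_ind (I : finType) (P : pred I) : \prod_i ind' (P i) = ind' [forall i, P i].
Proof.
case: (boolP [forall i, P i]) => h.
  by apply: big1 => i _; move/forallP: h => /(_ i) ->.
move/forallPn: h => [i hi]; rewrite (bigD1 i) //= /ind' (negbTE hi) mul0r.
by [].
Qed.

Lemma sum_ind (T : finType) (v : T) (F : T -> R) : \sum_k ind' (v == k) * F k = F v.
Proof.
rewrite (bigD1 v) //= eqxx mul1r big1 ?addr0 // => k hk.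
by rewrite /ind' eq_sym (negbTE hk) mul0r.
Qed.

Lemma per_j d k0 : ((s + d).+2 <= n.+1)%N -> (1 <= k0 < (s + d).+2)%N ->
  \sum_(a : 'I_s.+1) \sum_(C : CT)
     ((s.+1)%:R^-1 * \prod_(tau < n.+1) cw tau (C tau)) *
     ind' (idx s a (fun tau => C (inord tau)) (s + d).+2 == k0) = ((s + d).+1)%:R^-1.
Proof.
move=> ht hk.
have et : (s + d).+2 = (s.+2 + d)%N by rewrite !addSn.
rewrite et in ht hk *.
set t := (s.+2 + d)%N in ht hk *.
have hst : (s.+2 <= t)%N by rewrite /t leq_addr.
case/andP: hk => hk1 hk2.
have hkn : (k0 < n.+1)%N by exact: leq_trans hk2 ht.
set L := maxn s.+2 k0.+1.
have hL2 : (2 <= L)%N := leq_trans (isT : (2 <= s.+2)%N) (leq_maxl _ _).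
have hLt : (L <= t)%N by rewrite geq_max hst hk2.
under eq_bigr do under eq_bigr do rewrite (ind_prod_form _ _ ht) ?hk1 ?hk2 //.
have e1 : forall a : 'I_s.+1, \sum_(C : CT) ((s.+1)%:R^-1 * \prod_(tau < n.+1) cw tau (C tau)) *
      (alph k0 a * \prod_(tau < n.+1) bet t k0 tau (C tau)) =
    (s.+1)%:R^-1 * alph k0 a *
      \prod_(tau < n.+1) (\sum_b cw tau b * bet t k0 tau b).
  move=> a; rewrite (bigA_distr_bigA (fun (tau : 'I_n.+1) (b : bool) => cw tau b * bet t k0 tau b)) /=.
  rewrite mulr_sumr; apply: eq_bigr => C _; rewrite big_split /=.
  ring.
under eq_bigr do rewrite e1.
rewrite -big_distrl -mulr_sumr /=.
have e2 : forall tau : 'I_n.+1, \sum_b cw tau b * bet t k0 tau b =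
    (if (tau == k0 :> nat) && (s.+2 <= k0)%N then k0%:R^-1 else 1) *
    (if (L <= tau < t)%N then 1 - tau%:R^-1 else 1).
  move=> tau; rewrite big_bool /bet /cw /coin_weight /ind' /= -/L.
  have hx : (tau == k0 :> nat) && (s.+2 <= k0)%N -> (L <= tau < t)%N = false.
    by case/andP => /eqP -> _; rewrite /L geq_max ltnn andbF.
  case: ifP => h1.
    rewrite (hx h1) /=; move: h1 => /andP[/eqP -> _]; ring.
  by case: ifP => h2 /=; ring.
rewrite (eq_bigr _ (fun tau _ => e2 tau)) big_split /=.
rewrite (prod_range (fun tau => 1 - tau%:R^-1) L ht) telescope ?hL2 ?hLt //.
have hkR : k0%:R != 0 :> R by rewrite pnatr_eq0 -lt0n.
have ht1 : (t.-1)%:R != 0 :> R by rewrite pnatr_eq0 -lt0n -ltnS prednK ?(leq_trans _ hst) //.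
have hs1 : (s.+1)%:R != 0 :> R by rewrite pnatr_eq0.
have -> : (s + d).+1 = t.-1 by rewrite /t addSn.
have hsR : 0 <= s%:R :> R by exact: ler0n.
have hdR : 0 <= d%:R :> R by exact: ler0n.
have hkR' : 0 < k0%:R :> R by rewrite ltr0n.
case: (boolP (s.+2 <= k0)%N) => hsk.
  have hLk : L = k0.+1 by apply/maxn_idPr; exact: ltnW.
  rewrite /alph hsk sumr_const card_ord.
  rewrite (bigD1 (Ordinal hkn)) //= eqxx /= big1 ?mulr1; last first.
    move=> tau htau.
    have hne : (nat_of_ord tau == k0) = false.
      by apply/negbTE; apply: contra htau => /eqP h; apply/eqP; apply: val_inj.
    by rewrite hne.
  rewrite hLk /= -[1 *+ s.+1]/((s.+1)%:R).
  field; apply/and3P; split; rewrite gt_eqF //; lra.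
have hLs : L = s.+2 by apply/maxn_idPl; rewrite ltnNge.
have -> : \prod_(i < n.+1) (if (nat_of_ord i == k0) && false then k0%:R^-1 else 1) = 1 :> R.
  by apply: big1 => i _; rewrite andbF.
have hk0 : (k0.-1 < s.+1)%N by rewrite -ltnS prednK // ltnNge.
rewrite /alph (negbTE hsk) (bigD1 (Ordinal hk0)) //= big1 ?addr0; last first.
  move=> a ha; rewrite /ind'.
  have -> : (a.+1 == k0) = false.
    apply/negbTE; apply: contra ha => /eqP h; apply/eqP; apply: val_inj => /=.
    by rewrite -h.
  by [].
rewrite prednK // eqxx hLs /=.
field; apply/andP; split; rewrite gt_eqF //; lra.
Qed.

Definition vecw d (w : Om) : {ffun 'I_s -> 'I_(s + d).+1} :=
  [ffun j => inord (bidx w j (s + d).+2).-1].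

Lemma bidx_bounds d (w : Om) j :
  (1 <= bidx w j (s + d).+2)%N && (bidx w j (s + d).+2 < (s + d).+2)%N.
Proof.
rewrite /bidx idx_ge1 andTb; apply: (idx_lt _ (ltn_ord (w.1 j))).
by rewrite !ltnS leq_addr.
Qed.

Lemma vecw_eq d (w : Om) k :
  ind' (vecw d w == k) = \prod_j ind' (bidx w j (s + d).+2 == (k j).+1).
Proof.
rewrite prod_ind; congr ind'.
apply/eqP/forallP => [<- j | h].
  case/andP: (bidx_bounds d w j) => b1 b2.
  have hb : ((bidx w j (s + d).+2).-1 < (s + d).+1)%N by rewrite -ltnS prednK.
  by rewrite ffunE inordK // prednK.
apply/ffunP => j; rewrite ffunE (eqP (h j)); apply: val_inj.
by rewrite /= inordK.
Qed.

Lemma pushforward d : ((s + d).+2 <= n.+1)%N ->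
  forall Phi : {ffun 'I_s -> 'I_(s + d).+1} -> R,
  \sum_(w : Om) rsx_weight R w * Phi (vecw d w) = avg Phi.
Proof.
move=> ht Phi.
have e : forall (w : Om) j, bidx w j (s + d).+2 =
    idx s (w.1 j) (fun tau => [ffun t => w.2 t j] (inord tau)) (s + d).+2.
  move=> w j; rewrite /bidx /rsx_coin; congr idx; apply: funext => tau.
  by rewrite ffunE.
have step : forall k, \sum_(w : Om) rsx_weight R w * ind' (vecw d w == k) =
    ((s + d).+1)%:R^-1 ^+ s.
  move=> k.
  under eq_bigr do rewrite weight_factor vecw_eq -big_split /=.
  under eq_bigr do under eq_bigr do rewrite e.
  rewrite (sum_factor (fun j a C => (s.+1)%:R^-1 * \prod_(tau < n.+1) cw tau (C tau) *
     ind' (idx s a (fun tau => C (inord tau)) (s + d).+2 == (k j).+1))).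
  rewrite (eq_bigr (fun _ => ((s + d).+1)%:R^-1)) ?prodr_const ?card_ord //.
  move=> j _; apply: per_j => //.
  by rewrite /= ltnS ltn_ord.
transitivity (\sum_(w : Om) rsx_weight R w * \sum_k ind' (vecw d w == k) * Phi k).
  by apply: eq_bigr => w _; rewrite sum_ind.
under eq_bigr do rewrite mulr_sumr.
rewrite exchange_big /=.
under eq_bigr do (under eq_bigr do rewrite mulrA; rewrite -big_distrl /= step).
rewrite -mulr_sumr /avg card_ffun !card_ord natrX exprVn.
by [].
Qed.
End Dist.

Section Numeric.
Variable R : realType.

Lemma ln2_ge : 4^-1 <= ln (2 : R).
Proof.
have h : expR (4^-1 : R) <= 2.
  apply: (le_trans (expR_le_inv _)); first lra.
  rewrite -[X in _ <= X]invrK lef_pV2 ?posrE; lra.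
rewrite -[X in X <= _](expRK (4^-1 : R)) ler_ln ?posrE ?expR_gt0 //.
Qed.

Lemma num_key (n s : nat) (delta c B Cd : R) :
  (2 <= n)%N -> (0 < s)%N -> 0 < delta < 1 -> 0 <= c -> 0 <= B -> 1 <= Cd ->
  2 * (2 * (Cd * (c * Num.sqrt (s%:R^-1))) +
       (B + 1) * Num.sqrt (8 * ln (2 * n%:R / delta) / s%:R))
  <= Cd * ((8 * c + 8 * (B + 1)) * Num.sqrt (ln (n%:R / delta) / s%:R)).
Proof.
move=> hn hs /andP[hd0 hd1] hc hB hCd.
have hnR : 2 <= n%:R :> R by rewrite (ler_nat R 2 n).
have hsR : 0 < s%:R :> R by rewrite ltr0n.
have hnd : 2 <= n%:R / delta.
  rewrite ler_pdivlMr //; apply: le_trans hnR; nra.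
set l := ln (n%:R / delta).
have hl2 : ln 2 <= l by rewrite /l ler_ln ?posrE //; lra.
have hl4 := ln2_ge.
have e2 : ln (2 * n%:R / delta) = ln 2 + l.
  by rewrite -mulrA lnM ?posrE //; lra.
set q := Num.sqrt (l / s%:R).
have hq : 0 <= q by exact: sqrtr_ge0.
have hls : 0 <= l / s%:R by rewrite divr_ge0 //; lra.
have sq4 : Num.sqrt (4 * (l / s%:R)) = 2 * q.
  have e4 : (4 : R) = 2 ^+ 2 by rewrite expr2; lra.
  by rewrite e4 sqrtrM ?sqr_ge0 // sqrtr_sqr ger0_norm.
have sq16 : Num.sqrt (16 * (l / s%:R)) = 4 * q.
  have e4 : (16 : R) = 4 ^+ 2 by rewrite expr2; lra.
  by rewrite e4 sqrtrM ?sqr_ge0 // sqrtr_sqr ger0_norm.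
have ha : Num.sqrt (s%:R^-1) <= 2 * q.
  rewrite -sq4 ler_sqrt; last by apply: mulr_ge0 => //; lra.
  rewrite mulrA -[X in X <= _]mul1r; apply: ler_wpM2r; [rewrite invr_ge0; lra|lra].
have hb : Num.sqrt (8 * ln (2 * n%:R / delta) / s%:R) <= 4 * q.
  rewrite -sq16 ler_sqrt; last by apply: mulr_ge0 => //; lra.
  rewrite e2 mulrA; apply: ler_wpM2r; [rewrite invr_ge0; lra|lra].
set a := Num.sqrt (s%:R^-1) in ha *.
set b := Num.sqrt _ in hb *.
have h1 : Cd * (c * a) <= Cd * (c * (2 * q)).
  by apply: ler_wpM2l; [lra|apply: ler_wpM2l].
have h2 : (B + 1) * b <= (B + 1) * (4 * q) by apply: ler_wpM2l; lra.
have h3 : (B + 1) * q <= Cd * ((B + 1) * q).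
  by rewrite -[X in X <= _]mul1r ler_wpM2r //; apply: mulr_ge0 => //; lra.
have h4 : 0 <= Cd * (c * q) by apply: mulr_ge0; [lra|exact: mulr_ge0].
nra.
Qed.
End Numeric.

Close Scope classical_set_scope.
Local Open Scope ring_scope.

Definition Sd_ Z (z : nat -> Z) s d : 'I_(s + d).+1 -> Z := fun i => z i.+1.
Arguments Sd_ {Z} z s d _.
Definition xd_ Z (z : nat -> Z) s d : Z := z (s + d).+2.
Definition DpF (R : realType) Z H (loss : H -> Z -> Z -> R) (z : nat -> Z) s d :=
  @Dp R Z H loss (xd_ z s d) (s + d).+1 s (Sd_ z s d).
Definition DmF (R : realType) Z H (loss : H -> Z -> Z -> R) (z : nat -> Z) s d :=
  @Dm R Z H loss (xd_ z s d) (s + d).+1 s (Sd_ z s d).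
Arguments DpF {R Z H} loss z s d.
Arguments DmF {R Z H} loss z s d.
Definition badev (R : realType) Z H (loss : H -> Z -> Z -> R) (z : nat -> Z) n s (u : R)
  (d : nat) (w : rsx_omega n s) : bool :=
  (u <= DpF loss z s d (vecw d w) - avg (DpF loss z s d)) ||
  (u <= DmF loss z s d (vecw d w) - avg (DmF loss z s d)).

Lemma ap_La (R : realType) Z H (loss : H -> Z -> Z -> R) (z : nat -> Z) s d h :
  allpairs_pen loss z (s + d).+2 h = La loss (xd_ z s d) (Sd_ z s d) h.
Proof. by rewrite /allpairs_pen /La big_add1 /= big_mkord. Qed.

Lemma bp_Lb (R : realType) Z H (loss : H -> Z -> Z -> R) (z : nat -> Z) n s
  (w : rsx_omega n s) d h : (0 < s)%N ->
  bufpen loss z w (s + d).+2 h = Lb loss (xd_ z s d) (Sd_ z s d) (vecw d w) h.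
Proof.
move=> hs; rewrite bufpen_big //; last by rewrite !ltnS leq_addr.
rewrite /Lb; congr (_ * _); apply: eq_bigr => j _.
case/andP: (bidx_bounds d w j) => b1 b2.
have hb : ((bidx w j (s + d).+2).-1 < (s + d).+1)%N by rewrite -ltnS prednK.
by rewrite /Sd_ /xd_ ffunE inordK ?prednK.
Qed.

Lemma bdiff_weaken (R : realType) m s (f : {ffun 'I_s -> 'I_m} -> R) c c' :
  c <= c' -> bdiff f c -> bdiff f c'.
Proof. by move=> hc hf k k' j0 hj; apply: le_trans (hf k k' j0 hj) hc. Qed.

Lemma ind_or (R : realType) a b : ind R (a || b) <= ind R a + ind R b.
Proof. by rewrite /ind; case: a; case: b => /=; lra. Qed.

Lemma ind_ge0 (R : realType) a : 0 <= ind R a.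
Proof. by rewrite /ind; case: a => //. Qed.

Theorem lemma22 (R : realType) (B c : R) :
  0 <= B -> 0 <= c ->
  exists K : R, 0 < K /\
  forall (Z H : Type) (loss : H -> Z -> Z -> R) (Cd : R),
    1 <= Cd ->
    (forall h x y, 0 <= loss h x y <= B) ->
    (forall (s m : nat) (S : 'I_m -> Z) (x : Z), (0 < s)%N -> (0 < m)%N ->
       rademacher loss s S x <= Cd * (c * Num.sqrt (s%:R^-1))) ->
    forall (n s : nat) (delta : R) (z : nat -> Z)
           (hs : rsx_omega n s -> nat -> H),
      (2 <= n)%N -> (0 < s)%N -> 0 < delta < 1 ->
      (exists hstar : H, forall h : H,
         (\sum_(2 <= t < n.+1) allpairs_pen loss z t hstar)
           <= (\sum_(2 <= t < n.+1) allpairs_pen loss z t h)) ->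
      rsx_Prob R [pred w : rsx_omega n s |
        regret loss n z (hs w) <=
        regret_buf loss z w (hs w)
          + Cd * (n.-1)%:R * (K * Num.sqrt (ln (n%:R / delta) / s%:R))]
      >= 1 - delta.
Proof.
move=> hB0 hc0.
exists (8 * c + 8 * (B + 1)); split; first lra.
move=> Z H loss Cd hCd hloss hrad n s delta z hsw hn hs hd [hstar hmin].
case/andP: hd => hd0 hd1.
set K := 8 * c + 8 * (B + 1).
set Bp := B + 1.
have hBp : 0 < Bp by rewrite /Bp; lra.
set u := Bp * Num.sqrt (8 * ln (2 * n%:R / delta) / s%:R).
set eps := 2 * (Cd * (c * Num.sqrt (s%:R^-1))) + u.
have hnR : 2 <= n%:R :> R by rewrite (ler_nat R 2 n).
have hn0 : 0 < n%:R :> R by lra.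
have hsR : 0 < s%:R :> R by rewrite ltr0n.
have hu0 : 0 <= u by apply: mulr_ge0; [lra|exact: sqrtr_ge0].
have heps0 : 0 <= eps.
  rewrite /eps; apply: addr_ge0 => //; apply: mulr_ge0 => //; apply: mulr_ge0; first lra.
  by apply: mulr_ge0 => //; exact: sqrtr_ge0.
have hy : 1 <= 2 * n%:R / delta.
  rewrite ler_pdivlMr //; lra.
have tail_val : expR (- (u ^+ 2 * s%:R / (8 * Bp ^+ 2))) = delta / (2 * n%:R).
  have hl0 : 0 <= 8 * ln (2 * n%:R / delta) / s%:R.
    apply: divr_ge0; last lra; apply: mulr_ge0; first lra; exact: ln_ge0.
  rewrite /u exprMn sqr_sqrtr //.
  have -> : Bp ^+ 2 * (8 * ln (2 * n%:R / delta) / s%:R) * s%:R / (8 * Bp ^+ 2)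
      = ln (2 * n%:R / delta).
    have hBp0 : Bp != 0 by rewrite gt_eqF.
    have hs0 : s%:R != 0 :> R by rewrite gt_eqF.
    by field; rewrite ?hBp0 ?hs0.
  rewrite expRN lnK ?posrE; last by apply: divr_gt0; lra.
  rewrite invf_div //.
pose bad := @badev R Z H loss z n s u.
have P_bad : forall d, ((s + d).+2 <= n)%N ->
    \sum_(w : rsx_omega n s) rsx_weight R w * ind R (bad d w) <= delta / n%:R.
  move=> d hd.
  have hdn : ((s + d).+2 <= n.+1)%N by exact: leqW.
  have hm : (0 < (s + d).+1)%N by [].
  apply: le_trans (ler_sum _ (fun w _ => ler_wpM2l (weight_ge0 R w) (ind_or R _ _))) _.
  under eq_bigr do rewrite mulrDr.
  rewrite big_split /=.
  rewrite (pushforward hdn (fun k => ind R (u <= DpF loss z s d k - avg (DpF loss z s d)))).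
  rewrite (pushforward hdn (fun k => ind R (u <= DmF loss z s d k - avg (DmF loss z s d)))).
  have t1 : avg (fun k => ind R (u <= DpF loss z s d k - avg (DpF loss z s d)))
      <= delta / (2 * n%:R).
    rewrite -tail_val; apply: mcdiarmid_tail => //.
    - apply: (bdiff_weaken (c := B / s%:R)).
        by apply: ler_wpM2r; [rewrite invr_ge0; lra|rewrite /Bp; lra].
      exact: (Dp_bdiff (xd_ z s d) (Sd_ z s d) hstar hloss hm hs).
    - move=> k; apply: le_trans (Dp_norm (xd_ z s d) (Sd_ z s d) hstar hloss hm hs k) _.
      by rewrite /Bp; lra.
  have t2 : avg (fun k => ind R (u <= DmF loss z s d k - avg (DmF loss z s d)))
      <= delta / (2 * n%:R).
    rewrite -tail_val; apply: mcdiarmid_tail => //.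
    - apply: (bdiff_weaken (c := B / s%:R)).
        by apply: ler_wpM2r; [rewrite invr_ge0; lra|rewrite /Bp; lra].
      exact: (Dm_bdiff (xd_ z s d) (Sd_ z s d) hstar hloss hm hs).
    - move=> k; apply: le_trans (Dm_norm (xd_ z s d) (Sd_ z s d) hstar hloss hm hs k) _.
      by rewrite /Bp; lra.
  have -> : delta / n%:R = delta / (2 * n%:R) + delta / (2 * n%:R).
    field; rewrite gt_eqF //.
  exact: lerD.
have good : forall d (w : rsx_omega n s), ((s + d).+2 <= n)%N -> ~~ bad d w ->
    forall h, `|allpairs_pen loss z (s + d).+2 h - bufpen loss z w (s + d).+2 h| <= eps.
  move=> d w hd hb h.
  have hm : (0 < (s + d).+1)%N by [].
  rewrite ap_La bp_Lb //.
  move: hb; rewrite /bad /badev /DpF /DmF negb_or -!ltNge => /andP[hp hm'].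
  have hrad' := hrad s _ (Sd_ z s d) (xd_ z s d) hs hm.
  have hDp := avg_Dp_rad (xd_ z s d) (Sd_ z s d) hstar hloss hm hs.
  have hDm := avg_Dm_rad (xd_ z s d) (Sd_ z s d) hstar hloss hm hs.
  have u1 : La loss (xd_ z s d) (Sd_ z s d) h - Lb loss (xd_ z s d) (Sd_ z s d) (vecw d w) h
      <= Dp loss (xd_ z s d) (Sd_ z s d) (vecw d w).
    have hbnd : forall h', La loss (xd_ z s d) (Sd_ z s d) h' - Lb loss (xd_ z s d) (Sd_ z s d) (vecw d w) h' <= B.
      move=> h'; have := La_leB (xd_ z s d) (Sd_ z s d) hloss hm h'.
      have := Lb_ge0 (xd_ z s d) (Sd_ z s d) hloss hs (vecw d w) h'; lra.
    exact: (sup_range_ub hbnd h).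
  have u2 : Lb loss (xd_ z s d) (Sd_ z s d) (vecw d w) h - La loss (xd_ z s d) (Sd_ z s d) h
      <= Dm loss (xd_ z s d) (Sd_ z s d) (vecw d w).
    have hbnd : forall h', Lb loss (xd_ z s d) (Sd_ z s d) (vecw d w) h' - La loss (xd_ z s d) (Sd_ z s d) h' <= B.
      move=> h'; have := La_ge0 (xd_ z s d) (Sd_ z s d) hloss hm h'.
      have := Lb_leB (xd_ z s d) (Sd_ z s d) hloss hs (vecw d w) h'; lra.
    exact: (sup_range_ub hbnd h).
  rewrite /eps ler_norml; apply/andP; split; lra.
pose BadSum (w : rsx_omega n s) :=
  \sum_(d < n) (if ((s + d).+2 <= n)%N then ind R (bad d w) else 0).
have BadSum_ge0 : forall w, 0 <= BadSum w.
  move=> w; apply: sumr_ge0 => d _; case: ifP => _ //; exact: ind_ge0.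
have allgood : forall w, BadSum w < 1 -> forall t, (2 <= t <= n)%N -> forall h,
    `|allpairs_pen loss z t h - bufpen loss z w t h| <= eps.
  move=> w hw t /andP[ht2 htn] h.
  have [hts|hts] := leqP t s.+1.
    rewrite bufpen_small; last by rewrite hts andbT ltnW.
    by rewrite subrr normr0.
  pose d := (t - s.+2)%N.
  have et : t = (s + d).+2 by rewrite /d -addSn -addSn subnKC.
  rewrite et in htn *.
  have hdn : (d < n)%N.
    apply: leq_trans htn; rewrite ltnS; exact: leq_trans (leq_addl s d) (leqnSn _).
  apply: good => //.
  apply/negP => hb.
  have : ind R (bad d w) <= BadSum w.
    rewrite /BadSum (bigD1 (Ordinal hdn)) //= htn.
    rewrite -[X in X <= _]addr0 lerD2l; apply: sumr_ge0 => d' _.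
    by case: ifP => _ //; exact: ind_ge0.
  rewrite /ind hb; lra.
have regret_ok : forall w, BadSum w < 1 ->
    regret loss n z (hsw w) <=
    regret_buf loss z w (hsw w) + Cd * (n.-1)%:R * (K * Num.sqrt (ln (n%:R / delta) / s%:R)).
  move=> w hw.
  have ag := allgood w hw.
  have hsum : forall (f : nat -> H),
      \sum_(2 <= t < n.+1) allpairs_pen loss z t (f t) <=
      \sum_(2 <= t < n.+1) bufpen loss z w t (f t) + (n.-1)%:R * eps.
    move=> f.
    have -> : (n.-1)%:R * eps = \sum_(2 <= t < n.+1) eps.
      by rewrite sumr_const_nat mulr_natl subSS subn1.
    rewrite -big_split /=; apply: ler_sum_nat => t /andP[h1 h2].
    have := ag t; rewrite h1 /= -ltnS h2 => /(_ isT (f t)).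
    rewrite ler_norml => /andP[_ ?]; lra.
  have hsum' : forall (f : nat -> H),
      \sum_(2 <= t < n.+1) bufpen loss z w t (f t) <=
      \sum_(2 <= t < n.+1) allpairs_pen loss z t (f t) + (n.-1)%:R * eps.
    move=> f.
    have -> : (n.-1)%:R * eps = \sum_(2 <= t < n.+1) eps.
      by rewrite sumr_const_nat mulr_natl subSS subn1.
    rewrite -big_split /=; apply: ler_sum_nat => t /andP[h1 h2].
    have := ag t; rewrite h1 /= -ltnS h2 => /(_ isT (f t)).
    rewrite ler_norml => /andP[? _]; lra.
  have bp_ge0 : forall h, 0 <= \sum_(2 <= t < n.+1) bufpen loss z w t h.
    move=> h; apply: sumr_ge0 => t _; rewrite /bufpen mulr_ge0 ?invr_ge0 ?ler0n //.
    by apply: sumr_ge0 => x _; case/andP: (hloss h (z t) x).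
  have iA : \sum_(2 <= t < n.+1) allpairs_pen loss z t hstar <=
      inf (range (fun h => \sum_(2 <= t < n.+1) allpairs_pen loss z t h)).
    exact: (inf_range_ge hstar hmin).
  have iB : inf (range (fun h => \sum_(2 <= t < n.+1) bufpen loss z w t h)) <=
      \sum_(2 <= t < n.+1) bufpen loss z w t hstar.
    exact: (inf_range_lb bp_ge0).
  have h1 := hsum (fun t => hsw w t.-1).
  have h2 := hsum' (fun _ => hstar).
  have hk := num_key hn hs (introT andP (conj hd0 hd1)) hc0 hB0 hCd.
  have hnm : 0 <= (n.-1)%:R :> R by exact: ler0n.
  have hk' : (n.-1)%:R * (2 * eps) <=
      (n.-1)%:R * (Cd * (K * Num.sqrt (ln (n%:R / delta) / s%:R)))
    by apply: ler_wpM2l.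
  rewrite /regret /regret_buf /=.
  have e3 : Cd * (n.-1)%:R * (K * Num.sqrt (ln (n%:R / delta) / s%:R)) =
    (n.-1)%:R * (Cd * (K * Num.sqrt (ln (n%:R / delta) / s%:R))) by ring.
  rewrite e3; lra.
rewrite /rsx_Prob.
set E := [pred w : rsx_omega n s | _].
have tot := total_weight R n s.
rewrite (bigID E) /= in tot.
have hbadw : \sum_(w : rsx_omega n s | ~~ E w) rsx_weight R w <= delta.
  rewrite big_mkcond /=.
  apply: le_trans (_ : \sum_(w : rsx_omega n s) rsx_weight R w * BadSum w <= delta).
    apply: ler_sum => w _; case: ifP => hE.
      have [h1|h1] := leP 1 (BadSum w).
        by rewrite -[X in X <= _]mulr1 ler_wpM2l // weight_ge0.
      exfalso; move/negP: hE; apply; rewrite /E /=; exact: regret_ok w h1.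
    by apply: mulr_ge0; [exact: weight_ge0|exact: BadSum_ge0].
  under eq_bigr do rewrite /BadSum mulr_sumr.
  rewrite exchange_big /=.
  apply: le_trans (_ : \sum_(d < n) delta / n%:R <= delta); last first.
    by rewrite sumr_const card_ord -[(delta / n%:R) *+ n]mulr_natr divfK // gt_eqF.
  apply: ler_sum => d _; case: (boolP ((s + d).+2 <= n)%N) => hd /=.
    exact: P_bad.
  rewrite big1; last by move=> w _; rewrite mulr0.
  by apply: divr_ge0; lra.
have hgood : \sum_(w : rsx_omega n s | E w) rsx_weight R w = 1 - \sum_(w | ~~ E w) rsx_weight R w.
  by rewrite -tot addrK.
rewrite hgood; lra.
Qed.
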